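(* Let $t \in \mathbb{N}$ and let $G \in \mathcal{X}_t$ be a graph with no cut vertex. Let $A,B\subseteq V(G)$ be disjoint independent sets that are complete to each other, with $|A|,|B|\ge 3t^2+t+1$, such that $G[A\cup B]$ is a maximal induced complete bipartite subgraph of $G$ (i.e. there are no independent sets $A'\supseteq A$, $B'\supseteq B$, disjoint and complete to each other, with $A'\cup B'\supsetneq A\cup B$). Then $A\cup B$ is a module of $G$.
   Context: All graphs are finite and simple. For graphs $G_1=(V_1,E_1)$, $G_2=(V_2,E_2)$, $G_1\cap G_2=(V_1\cap V_2, E_1\cap E_2)$. For a graph $G=(V,E)$ and an injective map $\alpha$ on $V$, $G^{\alpha}$ has vertex set $\alpha(V)$ and edge set $\{\{\alpha(v),\alpha(w)\}: \{v,w\}\in E\}$. We write $G\xrightarrow{\cap} H$ if $H$ is (isomorphic to) $G^{\alpha_1}\cap\cdots\cap G^{\alpha_k}$ for some $k\ge1$ and injective maps $\alpha_1,\dots,\alpha_k$ on $V(G)$. For a set $M$ of graphs, $\mathrm{SiFree}(M)$ is the class of graphs $G$ such that $G\xrightarrow{\cap}F$ holds for no $F\in M$. For integers $a,b,c\ge1$, $S_{a,b,c}$ is the tree consisting of a vertex of degree $3$ together with three pendant paths having $a$, $b$, $c$ edges respectively; $tS_{t,t,t}$ is the disjoint union of $t$ copies of $S_{t,t,t}$, and $\mathcal{X}_t=\mathrm{SiFree}(\{tS_{t,t,t}\})$. A cut vertex is a vertex whose removal increases the number of connected components. Sets $X,Y$ are complete (anticomplete) to each other if every (no) vertex of $X$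 is adjacent to every (any) vertex of $Y$. A set $U\subseteq V(G)$ is a module if every vertex of $V(G)\setminus U$ is complete or anticomplete to $U$. *)

(* Defs.v *)
From mathcomp Require Import all_boot.
Set Implicit Arguments. Unset Strict Implicit. Unset Printing Implicit Defensive.

Record sgraph := SGraph {
  svert : finType;
  sadj : rel svert;
  sadj_sym : symmetric sadj;
  sadj_irr : irreflexive sadj }.

(* G -->cap H : H is isomorphic to G^{alpha_0} cap ... cap G^{alpha_{k-1}}
   for some k >= 1 and injective maps alpha_i on V(G).  The ambient universe
   into which the alpha_i map is taken to be nat.
   Vertex set of the intersection: {u | forall i < k, u in alpha_i(V)};
   edge set: {{u,w} | forall i < k, {u,w} = {alpha_i a, alpha_i b}, ab in E}.
   The isomorphism is an injection f : V(H) -> nat onto that vertex set that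
   preserves and reflects adjacency. *)
Definition si_to (G H : sgraph) : Prop :=
  exists (k : nat) (alpha : nat -> svert G -> nat),
    0 < k /\ (forall i, i < k -> injective (alpha i)) /\
    exists f : svert H -> nat,
      injective f /\
      (forall u : nat,
          (exists x, f x = u) <-> (forall i, i < k -> exists v, alpha i v = u)) /\
      (forall x y : svert H,
          @sadj H x y <->
          (forall i, i < k -> exists a b,
               @sadj G a b /\ alpha i a = f x /\ alpha i b = f y)).

Definition SiFree (M : sgraph -> Prop) (G : sgraph) : Prop :=
  forall F, M F -> ~ si_to G F.

(* t S_{t,t,t}: vertices (c, None) = centre of copy c,
   (c, Some (j, p)) = vertex at distance p+1 from the centre on leg j of copy c. *)
Definition tS_vert (t : nat) : finType := ('I_t * option ('I_3 * 'I_t))%type.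

Definition tS_adj0 (t : nat) (x y : tS_vert t) : bool :=
  (x.1 == y.1) &&
  match x.2, y.2 with
  | None, Some (_, p) => val p == 0
  | Some (j, p), Some (j', p') => (j == j') && (val p' == (val p).+1)
  | _, _ => false
  end.

Definition tS_adj (t : nat) : rel (tS_vert t) :=
  fun x y => tS_adj0 x y || tS_adj0 y x.

Lemma tS_adj_sym t : symmetric (@tS_adj t).
Proof. by move=> x y; rewrite /tS_adj orbC. Qed.

Lemma tS_adj_irr t : irreflexive (@tS_adj t).
Proof.
move=> [c [[j p]|]]; rewrite /tS_adj /tS_adj0 /= ?eqxx //=.
by rewrite orbb; apply/negP => /eqP /n_Sn.
Qed.

Definition tStt (t : nat) : sgraph := SGraph (@tS_adj_sym t) (@tS_adj_irr t).

Definition X_class (t : nat) (G : sgraph) : Prop :=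
  SiFree (fun F => F = tStt t) G.

Section GraphNotions.
Variable G : sgraph.
Local Notation V := (svert G).
Local Notation adj := (@sadj G).

Definition ncomp : nat := #|[set [set y | connect adj x y] | x : V]|.

Definition adj_del (v : V) : rel V := fun x y => [&& adj x y, x != v & y != v].

Definition ncomp_del (v : V) : nat :=
  #|[set [set y | connect (adj_del v) x y] | x in [set~ v]]|.

Definition cut_vertex (v : V) : Prop := ncomp < ncomp_del v.

Definition independent (A : {set V}) : Prop :=
  forall x y, x \in A -> y \in A -> ~~ adj x y.

Definition complete_to (A B : {set V}) : Prop :=
  forall x y, x \in A -> y \in B -> adj x y.

Definition anticomplete_to (A B : {set V}) : Prop :=
  forall x y, x \in A -> y \in B -> ~~ adj x y.

Definition is_module (U : {set V}) : Prop :=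
  forall v, v \notin U -> complete_to [set v] U \/ anticomplete_to [set v] U.

End GraphNotions.

(* Main.v *)
Require Import Defs.
From mathcomp Require Import all_boot zify.
From Stdlib Require Import ClassicalEpsilon Classical.
Set Implicit Arguments. Unset Strict Implicit. Unset Printing Implicit Defensive.


Definition goodmap (G H : sgraph) (phi : svert H -> svert G) :=
  injective phi /\ forall x y, @sadj H x y -> @sadj G (phi x) (phi y).

Lemma si_of_good (G H : sgraph) (phi0 : svert H -> svert G) :
  goodmap phi0 ->
  (forall x y : svert H, ~~ @sadj H x y -> exists phi, goodmap phi /\ ~~ @sadj G (phi x) (phi y)) ->
  si_to G H.
Proof.
move=> g0 hgood.
have ex : forall p : svert H * svert H, exists phi : svert H -> svert G,
    goodmap phi /\ (~~ @sadj H p.1 p.2 -> ~~ @sadj G (phi p.1) (phi p.2)).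
  move=> [x y] /=; case: (boolP (@sadj H x y)) => hxy.
    by exists phi0; split.
  by have [phi [g1 g2]] := hgood x y hxy; exists phi; split.
pose Phi p := proj1_sig (constructive_indefinite_description _ (ex p)).
have PhiP p : goodmap (Phi p) /\ (~~ @sadj H p.1 p.2 -> ~~ @sadj G (Phi p p.1) (Phi p p.2)).
  exact: (proj2_sig (constructive_indefinite_description _ (ex p))).
pose s := map Some (enum [set: (svert H * svert H)%type]).
pose phi i := if nth None s i is Some p then Phi p else phi0.
have phig i : goodmap (phi i).
  rewrite /phi; case: (nth None s i) => [p|] //; exact: (PhiP p).1.
pose N := #|svert G|.
pose f (x : svert H) := (2 * enum_rank x)%N.
have finj : injective f.
  move=> x y /eqP; rewrite /f eqn_mul2l /= => /eqP /val_inj; exact: enum_rank_inj.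
pose alpha i (g : svert G) :=
  if [pick x | phi i x == g] is Some x then f x else (2 * (N * i + enum_rank g)).+1.
have alpha_phi i x : alpha i (phi i x) = f x.
  rewrite /alpha; case: pickP => [x' /eqP e|/(_ x)]; last by rewrite eqxx.
  by rewrite ((phig i).1 _ _ e).
have odd_f x : odd (f x) = false by rewrite /f oddM.
have alpha_inj i : injective (alpha i).
  move=> g g'; rewrite /alpha.
  case: pickP => [x /eqP <-|nx]; case: pickP => [x' /eqP <-|nx'].
  - by move/finj ->.
  - by move=> e; have := odd_f x; rewrite e /= oddM.
  - by move=> e; have := odd_f x'; rewrite -e /= oddM.
  - move=> [] /eqP; rewrite eqn_mul2l /= eqn_add2l => /eqP /val_inj; exact: enum_rank_inj.
exists (size s).+2, alpha; split => //; split; first by move=> i _; exact: alpha_inj.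
exists f; split => //; split.
- move=> u; split.
    by move=> [x <-] i _; exists (phi i x); rewrite alpha_phi.
  move=> h; have [g0' e0] := h 0 isT; have [g1 e1] := h 1 isT.
  move: e0; rewrite /alpha; case: pickP => [x _ e|_ e]; first by exists x.
  move: e1; rewrite /alpha; case: pickP => [x _ e'|_ e'].
    by exfalso; move: (odd_f x); rewrite e' -e /= oddM.
  exfalso; move: e'; rewrite -e => -[] /eqP; rewrite muln0 muln1 add0n.
  have := ltn_ord (enum_rank g0'); rewrite eqn_mul2l /= => lt /eqP ee.
  by move: lt; rewrite -ee ltnNge leq_addr.
- move=> x y; split.
    move=> hxy i _; exists (phi i x), (phi i y); rewrite !alpha_phi; split => //.
    exact: (phig i).2.
  move=> h; apply/negPn/negP => nxy.
  have mem : Some (x, y) \in s by rewrite /s mem_map ?mem_enum ?inE // => ? ? [].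
  pose i := index (Some (x, y)) s.
  have hi : i < (size s).+2 by apply: (@leq_trans (size s)); [rewrite /i index_mem | apply: leqW; apply: leqnSn].
  have [a [b [ab [ea eb]]]] := h i hi.
  have ephi : phi i = Phi (x, y) by rewrite /phi nth_index.
  move: ea eb; rewrite -(alpha_phi i x) -(alpha_phi i y) => /alpha_inj ea /alpha_inj eb.
  move: ab; rewrite ea eb ephi; apply/negP; exact: ((PhiP (x, y)).2 nxy).
Qed.


Lemma fill (H G : finType) (Sp : {set H}) (sigma : H -> G) (A B : {set G})
  (sd : H -> bool) :
  #|H| <= #|A| -> #|H| <= #|B| -> [disjoint A & B] -> {in Sp &, injective sigma} ->
  exists phi : H -> G, injective phi /\ (forall z, z \in Sp -> phi z = sigma z) /\
    (forall z, z \notin Sp -> phi z \in (if sd z then B else A) /\ phi z \notin sigma @: Sp).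
Proof.
move=> hA hB dAB inj.
pose R := sigma @: Sp.
pose eN := enum (~: Sp).
pose eA := enum (A :\: R). pose eB := enum (B :\: R).
have cR : #|R| <= #|Sp| by exact: leq_imset_card.
have cN : #|~: Sp| = #|H| - #|Sp| by rewrite cardsCs setCK.
have cS : #|Sp| <= #|H| by exact: max_card.
have sA : size eN <= size eA.
  rewrite /eN /eA -!cardE cN cardsD.
  have := subset_leq_card (subsetIr A R); lia.
have sB : size eN <= size eB.
  rewrite /eN /eB -!cardE cN cardsD.
  have := subset_leq_card (subsetIr B R); lia.
pose phi z := if z \in Sp then sigma z else
   if sd z then nth (sigma z) eB (index z eN) else nth (sigma z) eA (index z eN).
have inN z : z \notin Sp -> index z eN < size eN by move=> h; rewrite index_mem mem_enum inE.
have propN z : z \notin Sp -> phi z \in (if sd z then B else A) /\ phi z \notin R.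
  move=> h; rewrite /phi (negbTE h).
  case: (sd z).
    have : nth (sigma z) eB (index z eN) \in eB by rewrite mem_nth // (leq_trans (inN z h)).
    by rewrite mem_enum inE => /andP [-> ->].
  have : nth (sigma z) eA (index z eN) \in eA by rewrite mem_nth // (leq_trans (inN z h)).
  by rewrite mem_enum inE => /andP [-> ->].
exists phi; split; last first.
  by split => // z h; rewrite /phi h.
move=> z z'.
case: (boolP (z \in Sp)) => hz; case: (boolP (z' \in Sp)) => hz'.
- by rewrite /phi hz hz'; exact: inj.
- move=> e; have [_] := propN z' hz'; rewrite -e /phi hz.
  by rewrite (imset_f sigma hz).
- move=> e; have [_] := propN z hz; rewrite e /phi hz'.
  by rewrite (imset_f sigma hz').
have eq_idx : index z eN = index z' eN -> z = z'.
  move=> e; rewrite -(nth_index z (_ : z \in eN)) ?mem_enum ?inE //.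
  by rewrite e nth_index // mem_enum inE.
have [h1 _] := propN z hz; have [h2 _] := propN z' hz'.
move: h1 h2; rewrite /phi (negbTE hz) (negbTE hz').
case: (sd z); case: (sd z') => h1 h2 e.
- apply: eq_idx; apply/eqP; move: e => /eqP.
  rewrite (set_nth_default (sigma z) (sigma z') (_ : index z' eN < _)) ?nth_uniq ?enum_uniq //.
  all: try exact: (leq_trans (inN z hz)).
  all: try exact: (leq_trans (inN z' hz')).

- by exfalso; first [move: (disjointFr dAB h1); rewrite e h2 | move: (disjointFr dAB h2); rewrite -e h1].
- by exfalso; first [move: (disjointFr dAB h1); rewrite e h2 | move: (disjointFr dAB h2); rewrite -e h1].
- apply: eq_idx; apply/eqP; move: e => /eqP.
  rewrite (set_nth_default (sigma z) (sigma z') (_ : index z' eN < _)) ?nth_uniq ?enum_uniq //.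
  all: try exact: (leq_trans (inN z hz)).
  all: try exact: (leq_trans (inN z' hz')).

Qed.


Lemma card_factor (T U0 U1 : finType) (D : {set T}) (g0 : T -> U0) (g1 : T -> U1) x y :
  {in D &, forall z z', g1 z = g1 z' -> g0 z = g0 z'} -> x \in D -> y \in D ->
  g0 x = g0 y -> g1 x != g1 y -> #|g0 @: D| < #|g1 @: D|.
Proof.
move=> fac xD yD e0 n1.
pose h K := if [pick z in D | g1 z == K] is Some z then g0 z else g0 x.
have hE z : z \in D -> h (g1 z) = g0 z.
  move=> zD; rewrite /h; case: pickP => [z' /andP [z'D /eqP e]|/(_ z)]; last by rewrite zD eqxx.
  exact: fac.
have -> : g0 @: D = h @: (g1 @: D).
  apply/setP => u; apply/imsetP/imsetP => [[z zD ->]|[K /imsetP [z zD ->] ->]].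
    by exists (g1 z); [exact: imset_f | rewrite hE].
  by exists z => //; rewrite hE.
rewrite ltn_neqAle leq_imset_card andbT.
apply/negP => /imset_injP inj; move: n1; rewrite (inj (g1 x) (g1 y)) ?eqxx ?imset_f //.
by rewrite !hE.
Qed.

Section Conn.
Variable G : sgraph.
Local Notation V := (svert G).
Local Notation adj := (@sadj G).

Lemma csym : connect_sym adj.
Proof. apply: sym_connect_sym; exact: sadj_sym. Qed.

Lemma conn_del (a x y : V) : ~ cut_vertex a -> x != a -> y != a ->
  adj x a -> connect adj x y -> connect (adj_del a) x y.
Proof.
move=> ncut xa ya xadj cxy; apply/negPn/negP => nc; apply: ncut.
rewrite /cut_vertex /ncomp /ncomp_del.
pose f0 z := [set w | connect adj z w].
pose f1 z := [set w | connect (adj_del a) z w].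
have f0E z z' : connect adj z z' -> f0 z = f0 z'.
  move=> c; apply/setP => w; rewrite !inE; apply/idP/idP => h; [rewrite csym in c; exact: connect_trans c h | exact: connect_trans c h].
have -> : [set [set y0 | connect adj x0 y0] | x0 : V] = f0 @: [set~ a].
  apply/setP => K; apply/imsetP/imsetP => [[z _ ->]|[z _ ->]]; last by exists z.
  case: (eqVneq z a) => [->|za].
    exists x; first by rewrite !inE.
    by apply: f0E; rewrite csym; apply: connect1.
  by exists z; rewrite ?inE.
apply: (@card_factor _ _ _ _ f0 f1 x y); rewrite ?inE //.
- move=> z z' _ _ e; apply: f0E.
  have : z' \in f1 z' by rewrite inE connect0.
  rewrite -e inE; apply: connect_sub => u w /andP [h _]; exact: connect1.
- exact: f0E.
- apply/eqP => e; move/negP: nc; apply.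
  have : y \in f1 y by rewrite inE connect0.
  by rewrite -e inE.
Qed.

End Conn.


Definition sideset (T : finType) (A B : {set T}) (s : bool) := if s then B else A.

Lemma path_del_neq (T : sgraph) (a x : svert T) p :
  path (adj_del a) x p -> forall z, z \in p -> z != a.
Proof.
elim: p x => [|y p IH] x //= /andP [/and3P [_ _ ya] hp] z.
rewrite inE => /orP [/eqP -> //|]; exact: IH hp z.
Qed.

Lemma disjP (T : finType) (X Y : {set T}) :
  reflect (forall z, z \in X -> z \in Y -> False) [disjoint X & Y].
Proof.
rewrite -setI_eq0; apply: (iffP eqP) => [e z zX zY|h].
  have : z \in X :&: Y by rewrite inE zX zY.
  by rewrite e inE.
apply/setP => z; rewrite !inE; apply/negbTE/negP => /andP []; exact: h.
Qed.

Section GData.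
Variable G : sgraph.
Local Notation V := (svert G).
Local Notation adj := (@sadj G).
Variables A B : {set V}.
Hypothesis dAB : [disjoint A & B].
Hypothesis iA : independent A.
Hypothesis iB : independent B.
Hypothesis cAB : complete_to A B.
Hypothesis maxAB : ~ exists A' B' : {set V},
       (A \subset A') /\ (B \subset B') /\ [disjoint A' & B'] /\
       independent A' /\ independent B' /\ complete_to A' B' /\
       (A :|: B \proper A' :|: B').
Hypothesis ncut : forall v : V, ~ cut_vertex v.
Hypothesis cA : 3 <= #|A|.
Hypothesis cB : 3 <= #|B|.

Lemma adjC (x y : V) : adj x y = adj y x.
Proof. exact: sadj_sym. Qed.

Lemma side_choice (v : V) : v \notin A :|: B ->
  (exists2 a, a \in A :|: B & adj v a) -> (exists2 b, b \in A :|: B & ~~ adj v b) ->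
  exists s a1 y0, [/\ a1 \in sideset A B s, adj v a1, y0 \in sideset A B s & ~~ adj v y0].
Proof.
move=> vU [a aU va] [b bU vb].
case: (boolP ([exists a1 in A, adj v a1] && [exists y in A, ~~ adj v y])).
  move=> /andP [/existsP [a1 /andP [h1 h2]] /existsP [y /andP [h3 h4]]].
  by exists false, a1, y.
move=> nA.
case: (boolP ([exists a1 in B, adj v a1] && [exists y in B, ~~ adj v y])).
  move=> /andP [/existsP [a1 /andP [h1 h2]] /existsP [y /andP [h3 h4]]].
  by exists true, a1, y.
move=> nB; exfalso; apply: maxAB.
have vnA : v \notin A by move: vU; rewrite inE negb_or => /andP [].
have vnB : v \notin B by move: vU; rewrite inE negb_or => /andP [].
have pr : forall X Y : {set V}, v \notin X :|: Y -> X :|: Y \proper X :|: (Y :|: [set v]).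
  move=> X Y h; apply/properP; split.
    by rewrite setUA subsetUl.
  by exists v => //; rewrite !inE eqxx !orbT.
have indep_add : forall X : {set V}, independent X -> (forall z, z \in X -> ~~ adj v z) ->
    independent (X :|: [set v]).
  move=> X iX h x y; rewrite !inE => /orP [hx|/eqP ->] /orP [hy|/eqP ->].
  - exact: iX.
  - by rewrite adjC; apply: h.
  - exact: h.
  - by rewrite sadj_irr.
have dis_add : forall X Y : {set V}, [disjoint X & Y] -> v \notin X -> [disjoint X & Y :|: [set v]].
  move=> X Y /disjP d h; apply/disjP => z zX; rewrite !inE => /orP [zY|/eqP ez].
    exact: d zX zY.
  by move: h; rewrite -ez zX.
move: aU; rewrite inE => /orP [aA|aB].
- have allA : forall y, y \in A -> adj v y.
    move=> y yA; apply/negPn/negP => ny; move: nA; rewrite negb_and => /orP [] /negP; apply.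
      by apply/existsP; exists a; rewrite aA.
    by apply/existsP; exists y; rewrite yA.
  have bB : b \in B.
    move: bU; rewrite inE => /orP [bA|//]; by move: vb; rewrite allA.
  have noB : forall y, y \in B -> ~~ adj v y.
    move=> y yB; apply/negP => vy; move: nB; rewrite negb_and => /orP [] /negP; apply.
      by apply/existsP; exists y; rewrite yB.
    by apply/existsP; exists b; rewrite bB.
  exists A, (B :|: [set v]); split => //; split; first exact: subsetUl.
  split; first exact: dis_add.
  split => //; split; first exact: indep_add.
  split; last exact: pr.
  move=> x y xA; rewrite !inE => /orP [yB|/eqP ->]; first exact: cAB.
  by rewrite adjC; apply: allA.
- have allB : forall y, y \in B -> adj v y.
    move=> y yB; apply/negPn/negP => ny; move: nB; rewrite negb_and => /orP [] /negP; apply.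
      by apply/existsP; exists a; rewrite aB.
    by apply/existsP; exists y; rewrite yB.
  have bA : b \in A.
    move: bU; rewrite inE => /orP [//|bB]; by move: vb; rewrite allB.
  have noA : forall y, y \in A -> ~~ adj v y.
    move=> y yA; apply/negP => vy; move: nA; rewrite negb_and => /orP [] /negP; apply.
      by apply/existsP; exists y; rewrite yA.
    by apply/existsP; exists b; rewrite bA.
  exists (A :|: [set v]), B; split; first exact: subsetUl.
  split => //; split.
    rewrite disjoint_sym; apply: dis_add; first by rewrite disjoint_sym.
    done.
  split; first exact: indep_add.
  split => //; split.
    move=> x y; rewrite !inE => /orP [xA|/eqP ->] yB; first exact: cAB.
    exact: allB.
  rewrite (setUC A B) (setUC (A :|: [set v]) B); apply: pr; by rewrite setUC.
Qed.

Lemma sideU s z : z \in sideset A B s -> z \in A :|: B.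
Proof. by case: s; rewrite /sideset inE => ->; rewrite ?orbT. Qed.

Lemma sideB s z : z \in sideset A B s -> (z \in B) = s.
Proof. by case: s => //= zA; exact: (disjointFr dAB zA). Qed.

Lemma gdata (v : V) : v \notin A :|: B ->
  (exists2 a, a \in A :|: B & adj v a) -> (exists2 b, b \in A :|: B & ~~ adj v b) ->
  exists a1 y0 (P : seq V),
   [/\ a1 \in A :|: B, adj v a1, y0 \in A :|: B, (y0 \in B) = (a1 \in B) & ~~ adj v y0] /\
   [/\ y0 != a1, uniq (v :: P), path adj v P & last v P \in A :|: B] /\
   (a1 \notin v :: P /\ y0 \notin v :: P).
Proof.
move=> vU ha hb.
have [s [a1 [y0' [a1T va1 y0T vy0]]]] := side_choice vU ha hb.
have a1U := sideU a1T; have y0U := sideU y0T.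
have a1v : a1 != v by apply: contraNneq vU => <-.
have y0v : y0' != v by apply: contraNneq vU => <-.
have y0a1 : y0' != a1 by apply: contraNneq vy0 => ->.
have sB : (y0' \in B) = (a1 \in B) by rewrite (sideB y0T) (sideB a1T).
case: (boolP [exists b in A :|: B, (b != a1) && adj v b]).
  move/existsP => [b /andP [bU /andP [ba vb]]].
  have bv : b != v by apply: contraNneq vU => <-.
  exists a1, y0', [:: b]; split; [split => // | split; [split => // | split]].
  - by rewrite /= inE andbT eq_sym bv.
  - by rewrite /= vb.
  - by rewrite !inE negb_or a1v eq_sym ba.
  - by rewrite !inE negb_or y0v; apply: contraNneq vy0 => ->.
move=> nex.
have : 0 < #|sideset A B (~~ s)| by rewrite /sideset; case: (~~ s); [apply: leq_trans cB | apply: leq_trans cA].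
case/card_gt0P => b' b'T.
have b'U := sideU b'T.
have ab' : adj a1 b'.
  move: (a1T) (b'T); rewrite /sideset; case: (s) => /= h1 h2; [rewrite adjC|]; exact: cAB.
have b'a1 : b' != a1.
  by apply/negP => /eqP e; move: (sideB b'T); rewrite e (sideB a1T); case: (s).
have conn : connect adj v b' by apply: connect_trans (connect1 va1) (connect1 ab').
have va1' : v != a1 by rewrite eq_sym.
have := conn_del (@ncut a1) va1' b'a1 va1 conn.
move=> /connectP [p pp lastp].
move: lastp; case: (shortenP pp) => p' pp' up' _ lastp.
have hasU : has (mem (A :|: B)) p'.
  apply/hasP; exists b' => //.
  have : b' \in v :: p' by rewrite lastp mem_last.
  rewrite inE => /orP [/eqP e|//]; by move: vU; rewrite -e b'U.
pose i := find (mem (A :|: B)) p'.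
have hi : i < size p' by rewrite /i -has_find.
pose w := nth v p' i.
have wU : w \in A :|: B by exact: (nth_find v hasU).
have qE : take i.+1 p' = rcons (take i p') w by rewrite (take_nth v hi).
have noU : forall z, z \in take i p' -> z \notin A :|: B.
  move=> z zt; apply/negP => zU.
  have : has (mem (A :|: B)) (take i p') by apply/hasP; exists z.
  by rewrite has_take // ltnn.
have : 0 < #|sideset A B s :\: [set a1; w]|.
  rewrite cardsD; have := subset_leq_card (subsetIr (sideset A B s) [set a1; w]).
  have cT : 3 <= #|sideset A B s| by rewrite /sideset; case: (s).
  rewrite cards2; move: cT; move: (#|sideset A B s|) (#|sideset A B s :&: [set a1; w]|) => m n.
  move=> h1 h2; rewrite subn_gt0; apply: (leq_ltn_trans h2); apply: (leq_trans _ h1).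
  by case: (a1 != w).
case/card_gt0P => y0; rewrite in_setD in_set2 negb_or => /andP [/andP [y0a1' y0w] y0T'].
have y0U' := sideU y0T'.
have p'a1 : forall z, z \in p' -> z != a1 := path_del_neq pp'.
exists a1, y0, (take i.+1 p'); split; [split => // | split; [split => // | split]].
- by rewrite (sideB y0T') (sideB a1T).
- apply/negP => vy; move/negP: nex; apply; apply/existsP; exists y0; by rewrite y0U' y0a1'.
- have := take_uniq i.+2 up'; by [].
- apply: (sub_path (e := adj_del a1)); last exact: take_path.
  by move=> x y /and3P [].
- by rewrite qE last_rcons.
- rewrite inE negb_or a1v /=; apply/negP => /mem_take /p'a1; by rewrite eqxx.
- rewrite inE negb_or qE mem_rcons inE negb_or y0w /=; apply/andP; split.
    by apply: contraNneq vU => <-.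
  by apply/negP => /noU; rewrite y0U'.
Qed.
End GData.


Section TS.
Variable t : nat.
Local Notation HV := (tS_vert t).

Definition par (z : HV) : bool := if z.2 is Some (_, p) then ~~ odd p else false.

Lemma adj_par (z z' : HV) : tS_adj z z' -> par z != par z'.
Proof.
case: z => c [[j p]|]; case: z' => c' [[j' p']|];
  rewrite /tS_adj /tS_adj0 /par /= ?andbF ?orbF ?orFb //=.
- by case/orP => /and3P [_ _ /eqP ->] /=; rewrite ?negbK //; case: (odd _).
- by case/andP => _ /eqP ->.
- by case/andP => _ /eqP ->.
Qed.

Lemma adj_comp (z z' : HV) : tS_adj z z' -> z.1 = z'.1.
Proof. by rewrite /tS_adj /tS_adj0 => /orP [] /andP [/eqP -> _]. Qed.

Variables (c : 'I_t) (j : 'I_3) (p : 'I_t).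

Definition intail (z : HV) : bool :=
  (z.1 == c) && (if z.2 is Some (j', q) then (j' == j) && (p <= q) else false).
Definition kidx (z : HV) : nat := if z.2 is Some (_, q) then q - p else 0.
Definition Xv : HV := (c, Some (j, p)).
Definition inner : HV :=
  match val p with 0 => (c, None) | _ => (c, Some (j, insubd p (val p).-1)) end.

Lemma Xv_tail : intail Xv. Proof. by rewrite /intail /= !eqxx leqnn. Qed.
Lemma Xv_k : kidx Xv = 0. Proof. by rewrite /kidx /= subnn. Qed.

Lemma inner_val (h : 0 < val p) : val (insubd p (val p).-1 : 'I_t) = (val p).-1.
Proof. by rewrite val_insubd (leq_ltn_trans (leq_pred _) (ltn_ord p)). Qed.

Lemma inner_tail : ~~ intail inner.
Proof.
rewrite /inner /intail; case E: (val p) => [|n]; first by rewrite /= andbF.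
rewrite /= eqxx !andTb.
have hn : n < t by move: (ltn_ord p); rewrite E => /ltnW.
have h : nat_of_ord (insubd p n : 'I_t) = n by have := val_insubd p n; rewrite hn.
by rewrite h E ltnn andbF.
Qed.

Lemma adj_Xinner : tS_adj Xv inner.
Proof.
rewrite /Xv /inner /tS_adj /tS_adj0; case E: (val p) => [|n] /=.
  by rewrite eqxx E orbT.
have hn : n < t by move: (ltn_ord p); rewrite E => /ltnW.
have h : nat_of_ord (insubd p n : 'I_t) = n by have := val_insubd p n; rewrite hn.
by rewrite eqxx /= h E !eqxx orbT.
Qed.

Lemma T1 (z z' : HV) : tS_adj z z' -> intail z -> ~~ intail z' -> z = Xv /\ z' = inner.
Proof.
case: z => cz [[jz qz]|]; last by rewrite /intail andbF.
rewrite /intail /= => + /andP [/eqP ecz /andP [/eqP ejz pq]]; subst cz jz.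
case: z' => cz' [[jz' qz']|]; rewrite /tS_adj /tS_adj0 /=.
- move=> /orP [] /and3P [/eqP ec /eqP ej /eqP eqq]; subst.
  + move/negP => h; exfalso; apply: h; apply/and3P; split => //; rewrite eqq; lia.
  + move=> h; have h' : ~~ (p <= qz').
      by apply/negP => h'; move/negP: h; apply; apply/and3P; split.
    have eq' : nat_of_ord p = qz'.+1 by move: pq h'; rewrite eqq; lia.
    split; first by congr (_, Some (_, _)); apply/val_inj => /=; lia.
    have eq2 : val p = qz'.+1 := eq'.
    rewrite /inner; move: eq2; case E: (val p) => [|n] // [en].
    have hn : n < t by move: (ltn_ord p); rewrite E => /ltnW.
    have h2 : nat_of_ord (insubd p n : 'I_t) = n by have := val_insubd p n; rewrite hn.
    by congr (_, Some (_, _)); apply/val_inj; rewrite /= h2.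
- rewrite andbF /= => /andP [/eqP ec /eqP q0] _; subst.
  have p0 : nat_of_ord p = 0 by move: pq; rewrite q0; lia.
  split; first by congr (_, Some (_, _)); apply/val_inj; rewrite /= p0 q0.
  have p0' : val p = 0 := p0.
  by rewrite /inner p0'.
Qed.

Lemma T2 (z z' : HV) : tS_adj z z' -> intail z -> intail z' ->
  kidx z' = (kidx z).+1 \/ kidx z = (kidx z').+1.
Proof.
case: z => cz [[jz qz]|]; last by rewrite /intail andbF.
case: z' => cz' [[jz' qz']|]; last by rewrite /intail andbF.
rewrite /intail /kidx /tS_adj /tS_adj0 /= => + /andP [_ /andP [_ h1]] /andP [_ /andP [_ h2]].
case/orP => /and3P [_ _ /eqP e]; [left|right]; rewrite e; lia.
Qed.

Lemma T3 (z z' : HV) : intail z -> intail z' -> kidx z = kidx z' -> z = z'.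
Proof.
case: z => cz [[jz qz]|]; last by rewrite /intail andbF.
case: z' => cz' [[jz' qz']|]; last by rewrite /intail andbF.
rewrite /intail /kidx /= => /andP [/eqP -> /andP [/eqP -> h1]] /andP [/eqP -> /andP [/eqP -> h2]] e.
by congr (_, Some (_, _)); apply/val_inj => /=; lia.
Qed.

Lemma par_inner : par inner != par Xv.
Proof. rewrite eq_sym; apply: adj_par; exact: adj_Xinner. Qed.

End TS.


Section Side.
Variable G : sgraph.
Variables A B : {set svert G}.
Hypothesis dAB : [disjoint A & B].
Hypothesis iA : independent A.
Hypothesis iB : independent B.
Hypothesis cAB : complete_to A B.

Lemma sidemem g : g \in A :|: B -> g \in sideset A B (g \in B).
Proof. rewrite inE /sideset; case: (boolP (g \in B)) => //; by rewrite orbF. Qed.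

Lemma side_adj s s' g g' : g \in sideset A B s -> g' \in sideset A B s' -> s != s' -> sadj g g'.
Proof.
case: s; case: s' => //= h1 h2 _; [rewrite sadj_sym|]; exact: cAB.
Qed.

Lemma side_nadj s g g' : g \in sideset A B s -> g' \in sideset A B s -> ~~ sadj g g'.
Proof. case: s => /= h1 h2; [exact: iB | exact: iA]. Qed.
End Side.

Lemma gadget (t : nat) (G : sgraph) (A B : {set svert G})
  (dAB : [disjoint A & B]) (iA : independent A) (iB : independent B) (cAB : complete_to A B)
  (hA : #|tS_vert t| <= #|A|) (hB : #|tS_vert t| <= #|B|)
  (v a1 y0 : svert G) (P : seq (svert G))
  (a1U : a1 \in A :|: B) (va1 : sadj v a1) (y0U : y0 \in A :|: B)
  (sy : (y0 \in B) = (a1 \in B)) (vy0 : ~~ sadj v y0) (y0a1 : y0 != a1)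
  (uP : uniq (v :: P)) (pP : path (@sadj G) v P) (wU : last v P \in A :|: B)
  (a1P : a1 \notin v :: P) (y0P : y0 \notin v :: P)
  (c : 'I_t) (j : 'I_3) (p : 'I_t) (Y : tS_vert t)
  (Ytail : ~~ intail c j p Y) (Ypar : par Y != par (Xv c j p))
  (XY : ~~ tS_adj (Xv c j p) Y) :
  exists phi : tS_vert t -> svert G,
    goodmap (G:=G) (H:=tStt t) phi /\ ~~ sadj (phi (Xv c j p)) (phi Y).
Proof.
pose u := inner c j p. pose X := Xv c j p.
pose L := size (v :: P).
pose it z := intail c j p z && (kidx p z < L).
pose sigma z := if it z then nth v (v :: P) (kidx p z) else if z == u then a1 else y0.
pose Sp := [set z | it z || (z == u) || (z == Y)].
pose w := last v P.
pose sd z := if intail c j p z then (w \in B) (+) odd (kidx p z - L.-1)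
             else (a1 \in B) (+) (par z (+) par u).
have utail : ~~ intail c j p u := inner_tail c j p.
have uY : Y != u.
  by apply: contraNneq XY => ->; exact: adj_Xinner.
have parYu : par Y = par u.
  by move: Ypar (par_inner c j p); rewrite -/u -/X; case: (par Y); case: (par u); case: (par X).
have itu : it u = false by rewrite /it (negbTE utail).
have itY : it Y = false by rewrite /it (negbTE Ytail).
have memP z : it z -> sigma z \in v :: P.
  by move=> h; rewrite /sigma h mem_nth // ; case/andP: h.
have sinj : {in Sp &, injective sigma}.
  move=> z z'; rewrite !inE => hz hz'.
  case: (boolP (it z)) => iz; case: (boolP (it z')) => iz'.
  - rewrite /sigma iz iz' => /eqP; rewrite nth_uniq //; try by [case/andP: iz | case/andP: iz'].
    move/eqP => ek; case/andP: iz => tz _; case/andP: iz' => tz' _; exact: (T3 tz tz' ek).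
  - move=> e; exfalso; have := memP z iz; rewrite e /sigma (negbTE iz').
    case: (z' == u); [by rewrite (negbTE a1P) | by rewrite (negbTE y0P)].
  - move=> e; exfalso; have := memP z' iz'; rewrite -e /sigma (negbTE iz).
    case: (z == u); [by rewrite (negbTE a1P) | by rewrite (negbTE y0P)].
  - move: hz hz'; rewrite (negbTE iz) (negbTE iz') /= /sigma (negbTE iz) (negbTE iz').
    case/orP => /eqP ->; case/orP => /eqP ->; rewrite ?eqxx ?(negbTE uY) //.
    + by move/eqP; rewrite eq_sym (negbTE y0a1).
    + by move/eqP; rewrite (negbTE y0a1).
have [phi [phinj [phiS phiN]]] := fill sd hA hB dAB sinj.
have LP : 0 < L by [].
have phiX : phi X = v.
  rewrite phiS; first by rewrite /sigma /it Xv_tail Xv_k.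
  by rewrite inE /it Xv_tail Xv_k.
have phiu : phi u = a1.
  by rewrite phiS ?inE ?eqxx ?orbT // /sigma itu eqxx.
have phiY : phi Y = y0.
  by rewrite phiS ?inE ?eqxx ?orbT // /sigma itY (negbTE uY).
have S1 z : ~~ intail c j p z -> phi z \in sideset A B ((a1 \in B) (+) (par z (+) par u)).
  move=> nz; case: (eqVneq z u) => [->|zu].
    by rewrite phiu addbb addbF; exact: sidemem.
  case: (eqVneq z Y) => [->|zY].
    by rewrite phiY parYu addbb addbF -sy; exact: sidemem.
  have zS : z \notin Sp by rewrite inE /it (negbTE nz) (negbTE zu) (negbTE zY).
  by have [+ _] := phiN z zS; rewrite /sd (negbTE nz).
have S2 z : intail c j p z -> L.-1 <= kidx p z ->
    phi z \in sideset A B ((w \in B) (+) odd (kidx p z - L.-1)).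
  move=> tz hk; case: (ltnP (kidx p z) L) => hkL.
    have ek : kidx p z = L.-1 by apply/eqP; rewrite eqn_leq hk andbT -ltnS.
    rewrite phiS; last by rewrite inE /it tz hkL.
    rewrite /sigma /it tz hkL ek subnn addbF /L /= -/w.
    have -> : nth v (v :: P) (size P) = w by exact: (nth_last v (v :: P)).
    exact: sidemem.
  have zS : z \notin Sp.
    rewrite inE /it tz /= ltnNge hkL /=; apply/negP => /orP [] /eqP ez.
      by move: utail; rewrite -ez tz.
    by move: Ytail; rewrite -ez tz.
  by have [+ _] := phiN z zS; rewrite /sd tz.
have tailstep z z' : intail c j p z -> intail c j p z' -> kidx p z' = (kidx p z).+1 ->
    sadj (phi z) (phi z').
  move=> tz tz' ek.
  case: (ltnP (kidx p z') L) => hk.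
    have hk0 : kidx p z < L by rewrite (leq_trans _ hk) // ek.
    rewrite (phiS z); last by rewrite inE /it tz hk0.
    rewrite (phiS z'); last by rewrite inE /it tz' hk.
    rewrite /sigma /it tz tz' hk hk0 /= ek /=.
    have hs : kidx p z < size P by move: hk; rewrite ek.
    by move/(pathP v): pP => /(_ _ hs).
  have hk1 : L.-1 <= kidx p z by move: hk; rewrite ek.
  have hk2 : L.-1 <= kidx p z' by rewrite ek (leq_trans hk1).
  apply: (side_adj cAB (S2 z tz hk1) (S2 z' tz' hk2)).
  by rewrite ek subSn //= ; case: (w \in B); case: (odd _).
exists phi; split; last by rewrite -/X phiX phiY.
split => // z z' hzz'.
have hzz : tS_adj z z' := hzz'.
case: (boolP (intail c j p z)) => tz; case: (boolP (intail c j p z')) => tz'.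
- case: (T2 hzz tz tz') => ek; first exact: tailstep.
  by rewrite sadj_sym; exact: tailstep.
- have [-> ->] := T1 hzz tz tz'; by rewrite -/u -/X phiX phiu.
- rewrite tS_adj_sym in hzz.
  have [-> ->] := T1 hzz tz' tz; by rewrite -/u -/X phiX phiu sadj_sym.
- apply: (side_adj cAB (S1 z tz) (S1 z' tz')).
  by move: (adj_par hzz); case: (par z); case: (par z'); case: (par u); case: (a1 \in B).
Qed.


Lemma pure (t : nat) (G : sgraph) (A B : {set svert G})
  (dAB : [disjoint A & B]) (iA : independent A) (iB : independent B) (cAB : complete_to A B)
  (hA : #|tS_vert t| <= #|A|) (hB : #|tS_vert t| <= #|B|) (g0 : svert G) (f : 'I_t -> bool) :
  exists phi : tS_vert t -> svert G,
    goodmap (G:=G) (H:=tStt t) phi /\ forall z, phi z \in sideset A B (par z (+) f z.1).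
Proof.
pose sd (z : tS_vert t) := par z (+) f z.1.
have sinj : {in (set0 : {set tS_vert t}) &, injective (fun _ : tS_vert t => g0)}.
  by move=> z z'; rewrite inE.
have [phi [phinj [_ phiN]]] := fill sd hA hB dAB sinj.
have hs z : phi z \in sideset A B (sd z).
  by have [+ _] := phiN z (negbT (in_set0 z)).
exists phi; split => // ; split => // z z' hzz'.
have hzz : tS_adj z z' := hzz'.
apply: (side_adj cAB (hs z) (hs z')).
rewrite /sd (adj_comp hzz).
by move: (adj_par hzz); case: (par z); case: (par z'); case: (f _).
Qed.

Lemma card_tS t : #|tS_vert t| = t * (1 + 3 * t).
Proof. by rewrite /tS_vert card_prod card_option card_prod !card_ord. Qed.

Lemma card_le t n : 3 * t ^ 2 + t + 1 <= n -> #|tS_vert t| <= n.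
Proof. rewrite card_tS; lia. Qed.

Lemma card_3 t n : 0 < t -> 3 * t ^ 2 + t + 1 <= n -> 3 <= n.
Proof. lia. Qed.

Unset Implicit Arguments.
Theorem mainTheorem3 (t : nat) (G : sgraph) (A B : {set svert G}) :
  X_class t G ->
  (forall v : svert G, ~ cut_vertex v) ->
  [disjoint A & B] ->
  independent A -> independent B -> complete_to A B ->
  3 * t ^ 2 + t + 1 <= #|A| -> 3 * t ^ 2 + t + 1 <= #|B| ->
  (~ exists A' B' : {set svert G},
       (A \subset A') /\ (B \subset B') /\ [disjoint A' & B'] /\
       independent A' /\ independent B' /\ complete_to A' B' /\
       (A :|: B \proper A' :|: B')) ->
  is_module (A :|: B).
Proof.
move=> hX ncut dAB iA iB cAB cA cB maxAB.
case: (classic (is_module (A :|: B))) => // nm; exfalso.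
have [v hv] := not_all_ex_not _ _ nm.
have [vU hv2] := imply_to_and _ _ hv.
have [nc na] := not_or_and _ _ hv2.
have hb : exists2 b, b \in A :|: B & ~~ sadj v b.
  apply: NNPP => hn; apply: nc => x y; rewrite inE => /eqP -> yU.
  by apply/negPn/negP => hb0; apply: hn; exists y.
have ha : exists2 a, a \in A :|: B & sadj v a.
  apply: NNPP => hn; apply: na => x y; rewrite inE => /eqP -> yU.
  by apply/negP => hb0; apply: hn; exists y.
have hTA := card_le cA. have hTB := card_le cB.
apply: (hX (tStt t) erefl).
have [phi0 [g0 _]] := pure dAB iA iB cAB hTA hTB v (fun _ => false).
apply: (si_of_good g0) => x y nxy.
case: (boolP ((x.1 != y.1) || (par x == par y))) => hc.
  pose f c := (c == x.1) && (par x != par y).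
  have [phi [gp hs]] := pure dAB iA iB cAB hTA hTB v f.
  exists phi; split => //.
  apply: (side_nadj iA iB (hs x)).
  have -> : par x (+) f x.1 = par y (+) f y.1.
    rewrite /f eqxx /=; case/orP: hc => [ne | /eqP ->].
      by rewrite (eq_sym y.1) (negbTE ne) /=; case: (par x); case: (par y).
    by rewrite eqxx /= andbF.
  exact: hs.
have ht : 0 < t := leq_ltn_trans (leq0n _) (ltn_ord x.1).
have [a1 [y0 [P [[a1U va1 y0U sy vy0] [[y0a1 uP pP wU] [a1P y0P]]]]]] :=
  gdata dAB iA iB cAB maxAB ncut (card_3 ht cA) (card_3 ht cB) vU ha hb.
have gad : forall c j p (Y : tS_vert t), ~~ intail c j p Y -> par Y != par (Xv c j p) ->
    ~~ tS_adj (Xv c j p) Y ->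
    exists phi : tS_vert t -> svert G,
      goodmap (G:=G) (H:=tStt t) phi /\ ~~ sadj (phi (Xv c j p)) (phi Y).
  move=> c j p Y h1 h2 h3.
  exact: (gadget dAB iA iB cAB hTA hTB a1U va1 y0U sy vy0 y0a1 uP pP wU a1P y0P h1 h2 h3).
have ntN : forall (c : 'I_t) (j : 'I_3) (p : 'I_t) (c' : 'I_t), ~~ intail c j p (c', None) by move=> *; rewrite /intail andbF.
move: hc; rewrite negb_or negbK => /andP [/eqP e1 hp].
have nxy' : ~~ tS_adj x y := nxy.
clear ht; move: nxy; case: x e1 hp nxy' => cx [[jx px]|] e1 hp nxy'; case: y e1 hp nxy' => cy [[jy py]|] /= e1 hp nxy' nxy.
- case: (boolP (intail cx jx px (cy, Some (jy, py)))) => ht1.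
    have : ~~ intail cy jy py (cx, Some (jx, px)).
      apply/negP => ht2; move: ht1 ht2 hp; rewrite /intail /= => /andP [/eqP e2 /andP [/eqP e3 l1]] /andP [_ /andP [_ l2]].
      have e4 : px = py by apply/val_inj/eqP; rewrite eqn_leq l1 l2.
      by subst; rewrite eqxx.
    move=> ht2; have hp' : par (cx, Some (jx, px)) != par (Xv cy jy py) by move: hp; rewrite /par /= eq_sym.
    have nxy2 : ~~ tS_adj (Xv cy jy py) (cx, Some (jx, px)) by rewrite tS_adj_sym; exact: nxy'.
    have [phi [gp hh]] := gad cy jy py (cx, Some (jx, px)) ht2 hp' nxy2.
    by exists phi; split => //; rewrite sadj_sym.
  have hq : par (cy, Some (jy, py)) != par (Xv cx jx px) by rewrite eq_sym.
  by have [phi [gp hh]] := gad cx jx px (cy, Some (jy, py)) ht1 hq nxy'; exists phi.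
- have hq : par (cy, None) != par (Xv cx jx px) by rewrite eq_sym.
  by have [phi [gp hh]] := gad cx jx px (cy, None) (ntN _ _ _ _) hq nxy'; exists phi.
- have hp' : par (cx, None) != par (Xv cy jy py) by move: hp; rewrite /par /= eq_sym.
  have nxy2 : ~~ tS_adj (Xv cy jy py) (cx, None) by rewrite tS_adj_sym; exact: nxy'.
  have [phi [gp hh]] := gad cy jy py (cx, None) (ntN _ _ _ _) hp' nxy2.
  by exists phi; split => //; rewrite sadj_sym.
- by move: hp; rewrite /par.
Qed.
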